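(* Let $k\ge 2$ and let $G$ be a digraph. Let $G'$ be the digraph constructed as follows: for each vertex $u$ of $G$, $G'$ has $k+1$ vertices $u^-,u^+,u_1,\dots,u_{k-1}$; for each $u$, both $\{u^-,u_1,\dots,u_{k-1}\}$ and $\{u^+,u_1,\dots,u_{k-1}\}$ induce symmetric complete digraphs (every pair joined by a digon), and $u^-u^+$ is an arc; for every arc $uv$ of $G$, $u^+v^-$ is an arc of $G'$; there are no other arcs. Then $\Delta_{min}(G')\le k$, and $G$ is $k$-dicolourable if and only if $G'$ is $k$-dicolourable.
   Context: Digraphs have no loops and no parallel arcs, but may contain digons. A digraph is $k$-dicolourable if its vertices can be coloured with $k$ colours so that no directed cycle is monochromatic. $\Delta_{min}(G)=\max_{v}\min(d^+(v),d^-(v))$. *)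

(* Defs.v *)
From mathcomp Require Import all_boot.
Set Implicit Arguments. Unset Strict Implicit. Unset Printing Implicit Defensive.

(* A digraph on a finite vertex type V is an arc relation e : rel V which is
   irreflexive (no loops); parallel arcs are impossible, digons are allowed. *)

Section Digraphs.
Variable V : finType.
Variable e : rel V.

Definition outdeg (v : V) : nat := #|[set w | e v w]|.
Definition indeg (v : V) : nat := #|[set w | e w v]|.

Definition delta_min : nat := \max_(v : V) minn (outdeg v) (indeg v).

Definition dicycle (c : seq V) : Prop := [/\ c != [::], uniq c & cycle e c].

Definition dicolourable (k : nat) : Prop :=
  exists f : V -> 'I_k, forall c : seq V, dicycle c ->
    exists x, exists y, [/\ x \in c, y \in c & f x != f y].
End Digraphs.

(* The construction G'.  Vertex (u, i) with i : 'I_k.+1 encodes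
   i = 0 : u^-,  i = 1 : u^+,  i = j+1 (1 <= j <= k-1) : u_j. *)
Definition gadget_vertex (V : finType) (k : nat) := (V * 'I_k.+1)%type.

Definition is_minus k (i : 'I_k.+1) : bool := val i == 0.
Definition is_plus k (i : 'I_k.+1) : bool := val i == 1.

Definition gadget_arc (V : finType) (k : nat) (e : rel V) :
  rel (gadget_vertex V k) :=
  fun x y =>
    [|| [&& x.1 == y.1, x.2 != y.2 &
          [|| ~~ is_plus x.2 && ~~ is_plus y.2,     (* clique on {u^-, u_1..u_{k-1}} *)
              ~~ is_minus x.2 && ~~ is_minus y.2    (* clique on {u^+, u_1..u_{k-1}} *)
            | is_minus x.2 && is_plus y.2]]         (* arc u^- u^+ *)
      | [&& is_plus x.2, is_minus y.2 & e x.1 y.1]]. (* arc u^+ v^- for uv in G *)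

(* Main.v *)
Require Import Defs.
From mathcomp Require Import all_boot zify.
Set Implicit Arguments. Unset Strict Implicit. Unset Printing Implicit Defensive.

Definition one3 (n : nat) : 'I_n.+3 := @Ordinal n.+3 1 isT.

Definition flat (V : finType) (n : nat) (s : seq V) : seq (V * 'I_n.+3) :=
  flatten [seq [:: (u, ord0); (u, one3 n)] | u <- s].

Lemma arc_pm (V : finType) n (e : rel V) x y :
  @gadget_arc V n.+2 e (x, one3 n) (y, ord0) = e x y.
Proof. by rewrite /gadget_arc /is_plus /is_minus /= andbF. Qed.

Lemma arc_mp (V : finType) n (e : rel V) x :
  @gadget_arc V n.+2 e (x, ord0) (x, one3 n).
Proof. by rewrite /gadget_arc /is_plus /is_minus /= eqxx. Qed.

Lemma arc_mm (V : finType) n (e : rel V) x y :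
  @gadget_arc V n.+2 e (x, ord0) (y, ord0) = false.
Proof. by rewrite /gadget_arc /is_plus /is_minus /= andbF. Qed.

Lemma arc_pp (V : finType) n (e : rel V) x y :
  @gadget_arc V n.+2 e (x, one3 n) (y, one3 n) = false.
Proof. by rewrite /gadget_arc /is_plus /is_minus /= andbF. Qed.

Lemma nonint_cases n (i : 'I_n.+3) : val i <= 1 -> i = ord0 \/ i = one3 n.
Proof.
case: i => [[|[|m]] Hm] //= _; [left|right]; exact: val_inj.
Qed.

Lemma eq01 n : (ord0 == one3 n :> 'I_n.+3) = false.
Proof. by []. Qed.
Lemma eq10 n : (one3 n == ord0 :> 'I_n.+3) = false.
Proof. by []. Qed.

Lemma flat_cons (V : finType) n u (s : seq V) :
  flat n (u :: s) = (u, ord0) :: (u, one3 n) :: flat n s.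
Proof. by []. Qed.

Lemma path_flat (V : finType) n (e : rel V) x s :
  path (@gadget_arc V n.+2 e) (x, one3 n) (flat n s) = path e x s.
Proof.
elim: s x => [|y s IH] x //=.
by rewrite arc_pm arc_mp IH.
Qed.

Lemma last_flat (V : finType) n x (s : seq V) :
  last (x, one3 n) (flat n s) = (last x s, one3 n).
Proof. by elim: s x => [|y s IH] x //=. Qed.

Lemma cycle_flat (V : finType) n (e : rel V) s :
  cycle (@gadget_arc V n.+2 e) (flat n s) = cycle e s.
Proof.
case: s => [|x s] //.
rewrite flat_cons /= rcons_path arc_mp path_flat last_flat arc_pm.
by rewrite rcons_path.
Qed.

Lemma mem_flat0 (V : finType) n x (s : seq V) :
  ((x, ord0) \in flat n s) = (x \in s).
Proof.
elim: s => [|y s IH] //=.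
by rewrite !in_cons IH !xpair_eqE eq01 eqxx andbF andbT.
Qed.

Lemma mem_flat1 (V : finType) n x (s : seq V) :
  ((x, one3 n) \in flat n s) = (x \in s).
Proof.
elim: s => [|y s IH] //=.
by rewrite !in_cons IH !xpair_eqE eq10 eqxx andbF andbT.
Qed.

Lemma mem_flat (V : finType) n x (s : seq V) :
  x \in flat n s -> x.1 \in s /\ (x.2 = ord0 \/ x.2 = one3 n).
Proof.
elim: s => [|y s IH] //=.
rewrite !in_cons => /orP[/eqP->|/orP[/eqP->|/IH[H1 H2]]] /=.
- by rewrite eqxx; split=>//; left.
- by rewrite eqxx; split=>//; right.
- by rewrite H1 orbT.
Qed.

Lemma uniq_flat (V : finType) n (s : seq V) :
  uniq (flat n s) = uniq s.
Proof.
elim: s => [|y s IH] //.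
rewrite flat_cons /= in_cons mem_flat0 mem_flat1 IH xpair_eqE eq01 andbF /=.
by case: (y \in s).
Qed.

Lemma digon_diff (T : finType) (g : rel T) k (f : T -> 'I_k) :
  (forall c, dicycle g c -> exists x y, [/\ x \in c, y \in c & f x != f y]) ->
  forall x y, x != y -> g x y -> g y x -> f x != f y.
Proof.
move=> Hf x y nxy gxy gyx.
have [a [b [Ha Hb Hab]]] : exists a b, [/\ a \in [:: x; y], b \in [:: x; y] & f a != f b].
  apply: Hf; split => //=; first by rewrite inE nxy.
  by rewrite gxy gyx.
move: Ha Hb Hab; rewrite !inE => /orP[]/eqP-> /orP[]/eqP->; rewrite ?eqxx //.
by rewrite eq_sym.
Qed.

Lemma pm_same (V : finType) n (e : rel V) (f : V * 'I_n.+3 -> 'I_n.+2) :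
  (forall c, dicycle (@gadget_arc V n.+2 e) c ->
     exists x y, [/\ x \in c, y \in c & f x != f y]) ->
  forall u, f (u, ord0) = f (u, one3 n).
Proof.
move=> Hf u.
pose h := fun j : 'I_n.+3 => f (u, j).
have hinj : {in [set~ one3 n] &, injective h}.
  move=> i j; rewrite !in_setC1 => Hi Hj hij; apply/eqP; apply/negPn/negP => nij.
  suff: f (u, i) != f (u, j) by rewrite /h in hij; rewrite hij eqxx.
  apply: (digon_diff Hf).
  - by rewrite xpair_eqE negb_and nij orbT.
  - by rewrite /gadget_arc /= eqxx nij /is_plus; move: Hi Hj; rewrite /one3 -!val_eqE /= => -> ->.
  - by rewrite /gadget_arc /= eqxx eq_sym nij /is_plus; move: Hi Hj; rewrite /one3 -!val_eqE /= => -> ->.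
have Hc : h (one3 n) \in h @: [set~ one3 n].
  apply/negPn/negP => Hn.
  have : #|h @: [set~ one3 n]| <= #|[set~ h (one3 n)]|.
    apply: subset_leq_card; apply/subsetP => z Hz; rewrite in_setC1.
    by apply/eqP => Ez; rewrite -Ez Hz in Hn.
  by rewrite (card_in_imset hinj) !cardsC1 !card_ord /= ltnn.
case/imsetP: Hc => j; rewrite in_setC1 => Hj Ej.
have [j0|nj0] := eqVneq j ord0; first by rewrite /h in Ej; rewrite Ej j0.
exfalso.
suff: f (u, one3 n) != f (u, j) by rewrite /h in Ej; rewrite Ej eqxx.
apply: (digon_diff Hf).
- by rewrite xpair_eqE negb_and eq_sym Hj orbT.
- by rewrite /gadget_arc /= eqxx eq_sym Hj /is_minus; move: nj0; rewrite -!val_eqE /= => ->.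
- by rewrite /gadget_arc /= eqxx Hj /is_minus; move: nj0; rewrite -!val_eqE /= => ->.
Qed.

Definition fB (V : finType) n (phi : V -> 'I_n.+2) (x : V * 'I_n.+3) : 'I_n.+2 :=
  if val x.2 <= 1 then phi x.1 else lift (phi x.1) (inord (val x.2 - 2)).

Lemma int_diff (V : finType) n (e : rel V) phi x y :
  1 < val x.2 -> @gadget_arc V n.+2 e x y -> fB phi x != fB phi y.
Proof.
case: x => u i; case: y => v j /= Hi.
rewrite /gadget_arc /is_plus /is_minus /=.
have -> : (val i == 1) = false by apply/negbTE; rewrite neq_ltn Hi orbT.
rewrite andFb orbF => /and3P[/eqP <- nij _].
rewrite /fB /= leqNgt Hi /=.
case: ifP => Hj; first by rewrite eq_sym neq_lift.
apply/negP => /eqP/lift_inj/(congr1 (@nat_of_ord _)).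
have := ltn_ord i; have := ltn_ord j; move/negbT: Hj; move: nij; rewrite -val_eqE /=.
move=> nij Hj Hjn Hin.
rewrite !inordK; lia.
Qed.

Lemma arc_mp' (V : finType) n (e : rel V) x y :
  @gadget_arc V n.+2 e (x, ord0) (y, one3 n) = (x == y).
Proof. by rewrite /gadget_arc /is_plus /is_minus /= eqxx andbT orbF. Qed.

Lemma decode (V : finType) n (e : rel V) (s : seq (V * 'I_n.+3)) u :
 (path (@gadget_arc V n.+2 e) (u, one3 n) s -> all (fun x => val x.2 <= 1) s ->
   is_plus (last (u, one3 n) s).2 -> exists p, s = flat n p) /\
 (path (@gadget_arc V n.+2 e) (u, ord0) s -> all (fun x => val x.2 <= 1) s ->
   is_plus (last (u, ord0) s).2 -> exists p, s = (u, one3 n) :: flat n p).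
Proof.
elim: s u => [|[v j] s IH] u; split.
- by exists [::].
- by [].
- rewrite /= => /andP[Ha Hp] /andP[Hj Hall] Hl.
  case: (nonint_cases Hj) => Ej; subst j.
  + have [_ H2] := IH v; have [p ->] := H2 Hp Hall Hl.
    by exists (v :: p).
  + by rewrite arc_pp in Ha.
- rewrite /= => /andP[Ha Hp] /andP[Hj Hall] Hl.
  case: (nonint_cases Hj) => Ej; subst j.
  + by rewrite arc_mm in Ha.
  + rewrite arc_mp' in Ha; move/eqP: Ha => Huv; subst v.
    have [H1 _] := IH u; have [p ->] := H1 Hp Hall Hl.
    by exists p.
Qed.

Lemma dirA (V : finType) n (e : rel V) :
  dicolourable (@gadget_arc V n.+2 e) n.+2 -> dicolourable e n.+2.
Proof.
case=> f Hf; exists (fun u => f (u, ord0)) => c [cne cu cc].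
have [|x [y [Hx Hy Hxy]]] := Hf (flat n c).
  split; last by rewrite cycle_flat.
  - by move: cne; case: c {cu cc}.
  - by rewrite uniq_flat.
have [Hx1 Hx2] := mem_flat Hx; have [Hy1 Hy2] := mem_flat Hy.
exists x.1, y.1; split => //.
move: Hxy; case: x Hx1 Hx2 {Hx} => u i /= _; case: y Hy1 Hy2 {Hy} => v j /= _.
by case=> ->; case=> ->; rewrite -?(pm_same Hf).
Qed.

Lemma dirB (V : finType) n (e : rel V) :
  dicolourable e n.+2 -> dicolourable (@gadget_arc V n.+2 e) n.+2.
Proof.
case=> phi Hphi; exists (fB phi) => c [cne cu cc].
case: c cne cu cc => [//|x0 c'] _ cu cc.
set c := x0 :: c' in cu cc *.
have x0c : x0 \in c by rewrite mem_head.
case Hh: (has (fun y => fB phi y != fB phi x0) c).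
  by case/hasP: Hh => y yc Hy; exists y, x0.
exfalso.
have Hall : forall y, y \in c -> fB phi y = fB phi x0.
  by move=> y yc; apply/eqP; move/hasPn: Hh => /(_ y yc); rewrite negbK.
set g := gadget_arc e in cc.
have nxt : forall x, x \in c -> next c x \in c by move=> x xc; rewrite mem_next.
have Hni : forall x, x \in c -> val x.2 <= 1.
  move=> x xc; rewrite leqNgt; apply/negP => Hx.
  have := int_diff phi Hx (next_cycle cc xc).
  by rewrite (Hall _ xc) (Hall _ (nxt _ xc)) eqxx.
have [x [xc Ex]] : exists x, x \in c /\ x.2 = ord0.
  case: (nonint_cases (Hni _ x0c)) => E0; first by exists x0.
  exists (next c x0); split; first exact: nxt.
  have := next_cycle cc x0c; have := Hni _ (nxt _ x0c).
  case: (next c x0) => v j /= Hj; case: (nonint_cases Hj) => -> //.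
  by rewrite [x0]surjective_pairing E0 /g arc_pp.
case/rot_to: xc => i s' Er.
have cc' : cycle g (x :: s') by rewrite -Er rot_cycle.
have cu' : uniq (x :: s') by rewrite -Er rot_uniq.
have sub' : forall y, y \in x :: s' -> y \in c by move=> y; rewrite -Er mem_rot.
move: cc' cu' sub'; rewrite [x]surjective_pairing Ex.
move: (x.1) => u cc' cu' sub'.
move: (cc'); rewrite /= rcons_path => /andP[Hp Hl].
have Hlp : is_plus (last (u, ord0) s').2.
  have := Hni _ (sub' _ (mem_last _ _)).
  move: Hl; case: (last (u, ord0) s') => v j Hl /= Hj.
  by case: (nonint_cases Hj) Hl => -> //; rewrite /g arc_mm.
have Hal : all (fun x => val x.2 <= 1) s'.
  by apply/allP => y ys; apply: Hni; apply: sub'; rewrite inE ys orbT.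
have [_ Hd] := @decode _ _ e s' u.
have [p Ep] := Hd Hp Hal Hlp.
have Ef : (u, ord0) :: s' = flat n (u :: p) by rewrite Ep.
rewrite Ef in cc' cu' sub'.
rewrite cycle_flat in cc'; rewrite uniq_flat in cu'.
have [a [b [Ha Hb Hab]]] := Hphi (u :: p) (And3 isT cu' cc').
have Ea := Hall _ (sub' _ (etrans (mem_flat0 _ _ _) Ha)).
have Eb := Hall _ (sub' _ (etrans (mem_flat0 _ _ _) Hb)).
by move: Hab; rewrite /fB /= in Ea Eb; rewrite Ea Eb eqxx.
Qed.

Lemma delta_part (V : finType) n (e : rel V) :
  delta_min (@gadget_arc V n.+2 e) <= n.+2.
Proof.
apply/bigmax_leqP => [[u i]] _.
set N := [set (u, j) | j in [set~ i]].
have cN : #|N| <= n.+2.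
  by apply: leq_trans (leq_imset_card _ _) _; rewrite cardsC1 card_ord.
have [Ei|Ni] := eqVneq i (one3 n).
- apply: leq_trans (geq_minr _ _) _; apply: leq_trans cN.
  apply: subset_leq_card; apply/subsetP => [[w j]]; rewrite inE Ei.
  rewrite /gadget_arc /is_minus /= !andbF orbF => /and3P[/eqP -> Hj _].
  by apply/imsetP; exists j; rewrite // in_setC1 Ei.
- apply: leq_trans (geq_minl _ _) _; apply: leq_trans cN.
  apply: subset_leq_card; apply/subsetP => [[w j]]; rewrite inE.
  rewrite /gadget_arc /=.
  have -> : is_plus i = false by apply/negbTE; move: Ni; rewrite -val_eqE.
  rewrite andFb orbF => /and3P[/eqP <- Hj _].
  by apply/imsetP; exists j; rewrite // in_setC1 eq_sym.
Qed.

Theorem mainTheorem10 (k : nat) (V : finType) (e : rel V) :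
  2 <= k -> irreflexive e ->
  delta_min (@gadget_arc V k e) <= k /\
  (dicolourable e k <-> dicolourable (@gadget_arc V k e) k).
Proof.
case: k => [|[|n]] // _ _; split; first exact: delta_part.
split; [exact: dirB | exact: dirA].
Qed.
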